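(* Assume (A1), (A2), (A3), and that for each class $c\in[C]$ the revision protocol $\rho^c$ is imitative via comparison, excess payoff, or pairwise comparison. If $\mu\in X$ is a mixed stationary Nash equilibrium, then $\mu$ is a rest point of the master equation, i.e., $f^{c,d}_{s,u}(\mu)+f^{c,r}_{s,u}(\mu)=0$ for all $c\in[C]$, $s\in\mathcal S^c$, $u\in\mathcal U^c_D$.
   Context: Model: classes $c\in[C]$ with masses $m^c>0$, finite state sets $\mathcal S^c$, nonempty finite admissible action sets $\mathcal A^c(s)$ ($\mathcal A^c=\bigcup_s\mathcal A^c(s)$), transition kernels $\phi^c(\cdot\mid s,a)\in\mathcal P(\mathcal S^c)$, action rates $\lambda^c>0$; $p=\sum_c|\mathcal S^c|,q=\sum_c|\mathcal A^c|$. $\mathcal U^c_D$ = deterministic policies ($s\mapsto u(s)\in\mathcal A^c(s)$; $u(a\mid s)=\mathbf 1[a=u(s)]$), $n^c=|\mathcal U^c_D|$. $\phi^{c,u}_{ss'}=\phi^c(s\mid s',u(s'))$. (A2): for all $c,u\in\mathcal U^c_D$, $\phi^{c,u}$ has exactly one recurrent communicating class; $\eta^{c,u}$ is the unique stationary distribution of the continuous-time chain with generator $\lambda^c(\phi^{c,u}-I)$. $X=\prod_c\{\mu^c\in\mathbb R_{\ge0}^{\mathcal S^c\times\mathcal U^c_D}:\sum\mu^c=m^c\}$, $X_{\mathcal S\times\mathcal A}=\prod_c\{\nu\in\mathbb R_{\ge0}^{\mathcal S^c\times\mathcal A^c}:\sum\nu=m^c\}$, $X^c_{\mathcal U_D}=\{\sigma\in\mathbb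 R^{n^c}_{\ge0}:\sum\sigma=m^c\}$; $\mu^c_{\mathcal S\times\mathcal A}[s,a]=\sum_u\mu^c[s,u]u(a\mid s)$; $\mu^c[\mathcal S^c,u]=\sum_s\mu^c[s,u]$, $\mu^c[\mathcal S^c,\cdot]=(\mu^c[\mathcal S^c,u])_u$. Rewards $r^c:\mathcal S^c\times\mathcal A^c\times X_{\mathcal S\times\mathcal A}\to\mathbb R$; (A1): each $r^c(s,a,\cdot)$ extends to $\mathbb R^{pq}_{\ge0}$ with an extension continuously differentiable on $X_{\mathcal S\times\mathcal A}$. $F^c_u(\mu)=\sum_{s}\sum_{a\in\mathcal A^c(s)}\eta^{c,u}(s)u(a\mid s)r^c(s,a,\mu_{\mathcal S\times\mathcal A})$, $F^c(\mu)=(F^c_u(\mu))_u$. MSNE: $\mu\in X$ with, for all $c,u$: (i) $\mu^c[\mathcal S^c,u]>0\Rightarrow F^c_u(\mu)\ge F^c_v(\mu)\ \forall v\in\mathcal U^c_D$; (ii) $\mu^c[s,u]=\eta^{c,u}(s)\mu^c[\mathcal S^c,u]$ for all $s$. Revision protocol of class $c$: $\rho^c:\mathbb R^{n^c}\times X^c_{\mathcal U_D}\to\mathbb R^{n^c\times n^c}_{\ge0}$ with revision rate $R^c>0$; (A3): $\rho^c$ Lipschitz and $R^c\ge\sup_{\mu\in X}\sum_{v\ne u}\rho^c_{uv}(F^c(\mu),\mu^c[\mathcal S^c,\cdot])$ for all $u$. Classes: imitative: $\rho^c_{uv}(F,\sigma)=r^c_{uv}(F,\sigma)\sigma_v/m^c$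 with $r^c$ Lipschitz, nonnegative, and $F_v\ge F_u\iff r^c_{kv}-r^c_{vk}\ge r^c_{ku}-r^c_{uk}$ for all $F,\sigma,u,v,k$; imitative via comparison: imitative with additionally $\mathrm{sign}(r^c_{uv}(F,\sigma))=\mathrm{sign}(\max(0,F_v-F_u))$; excess payoff: $\rho^c_{uv}(F,\sigma)=\tau^c_v(\hat F)$ with $\hat F=F-\mathbf 1F^\top\sigma/m^c$ and $\tau^c:\mathbb R^{n^c}\to\mathbb R^{n^c}_{\ge0}$ Lipschitz with $\hat F\notin\mathbb R^{n^c}_{\le0}\Rightarrow\tau^c(\hat F)^\top\hat F>0$; pairwise comparison: $\rho^c_{uv}(F,\sigma)=\tau^c_{uv}(F)$ with $\tau^c$ Lipschitz, nonnegative and $\mathrm{sign}(\tau^c_{uv}(F))=\mathrm{sign}(\max(0,F_v-F_u))$. Master equation vector fields: $f^{c,d}_{s,u}(\mu)=\lambda^c\sum_{s'}\sum_{a'\in\mathcal A^c(s')}\phi^c(s\mid s',a')u(a'\mid s')\mu^c[s',u]-\lambda^c\mu^c[s,u]$; $f^{c,r}_{s,u}(\mu)=\sum_{u'}\mu^c[s,u']\rho^c_{u'u}(F^c(\mu),\mu^c[\mathcal S^c,\cdot])-\mu^c[s,u]\sum_{u'}\rho^c_{uu'}(F^c(\mu),\mu^c[\mathcal S^c,\cdot])$. *)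

(* Defs.v *)
From HB Require Import structures.
From mathcomp Require Import all_boot all_order all_algebra.
From mathcomp Require Import all_classical all_reals all_analysis.
Unset Printing Implicit Defensive.
Import Order.TTheory GRing.Theory Num.Theory.
Import numFieldNormedType.Exports.
Local Open Scope ring_scope.
Local Open Scope classical_set_scope.

Definition policy (St Ac : finType) (Adm : St -> {set Ac}) : finType :=
  {u : {ffun St -> Ac} | [forall s, u s \in Adm s]}.
Arguments policy {St Ac} Adm.

Definition pol_prob (R : realType) (St Ac : finType) (Adm : St -> {set Ac})
  (u : policy Adm) (s : St) (a : Ac) : R := ((val u) s == a)%:R.
Arguments pol_prob R {St Ac Adm} u s a.

Definition SA (C : nat) (S A : 'I_C -> finType) : finType :=
  {c : 'I_C & (S c * A c)%type}.
Arguments SA {C} S A.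

Section Model.
Variables (R : realType) (C : nat) (S A : 'I_C -> finType)
  (Adm : forall c, S c -> {set A c}).


Definition inX (m : 'I_C -> R) (mu : forall c, S c -> policy (Adm c) -> R) : Prop :=
  forall c, (forall s u, 0 <= mu c s u) /\ \sum_(s : S c) \sum_(u : policy (Adm c)) mu c s u = m c.

Definition inXSA (m : 'I_C -> R) (nu : SA S A -> R) : Prop :=
  (forall t, 0 <= nu t) /\
  forall c, \sum_(s : S c) \sum_(a : A c) nu (existT _ c (s, a)) = m c.

Definition inXU (U : finType) (mc : R) (sigma : U -> R) : Prop :=
  (forall u, 0 <= sigma u) /\ \sum_u sigma u = mc.

Definition muSA (mu : forall c, S c -> policy (Adm c) -> R) : SA S A -> R :=
  fun t => \sum_(u : policy (Adm (tag t))) mu (tag t) (tagged t).1 u *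
             pol_prob R u (tagged t).1 (tagged t).2.

Definition massU (mu : forall c, S c -> policy (Adm c) -> R) (c : 'I_C) : policy (Adm c) -> R :=
  fun u => \sum_(s : S c) mu c s u.

Definition Fpay (eta : forall c, policy (Adm c) -> S c -> R)
  (r : forall c, S c -> A c -> (SA S A -> R) -> R)
  (mu : forall c, S c -> policy (Adm c) -> R) (c : 'I_C) : policy (Adm c) -> R :=
  fun u => \sum_(s : S c) \sum_(a in Adm c s)
             eta c u s * pol_prob R u s a * r c s a (muSA mu).

Definition MSNE (m : 'I_C -> R) (eta : forall c, policy (Adm c) -> S c -> R)
  (r : forall c, S c -> A c -> (SA S A -> R) -> R)
  (mu : forall c, S c -> policy (Adm c) -> R) : Prop :=
  inX m mu /\
  forall c (u : policy (Adm c)),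
    (0 < massU mu c u -> forall v : policy (Adm c), Fpay eta r mu c v <= Fpay eta r mu c u) /\
    (forall s, mu c s u = eta c u s * massU mu c u).

Definition f_d (lam : 'I_C -> R) (phi : forall c, S c -> A c -> S c -> R)
  (mu : forall c, S c -> policy (Adm c) -> R) (c : 'I_C) (s : S c) (u : policy (Adm c)) : R :=
  lam c * (\sum_(s' : S c) \sum_(a' in Adm c s')
              phi c s' a' s * pol_prob R u s' a' * mu c s' u)
  - lam c * mu c s u.

Definition f_r (eta : forall c, policy (Adm c) -> S c -> R)
  (r : forall c, S c -> A c -> (SA S A -> R) -> R)
  (rho : forall c, (policy (Adm c) -> R) -> (policy (Adm c) -> R) -> policy (Adm c) -> policy (Adm c) -> R)
  (mu : forall c, S c -> policy (Adm c) -> R) (c : 'I_C) (s : S c) (u : policy (Adm c)) : R :=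
  \sum_(u' : policy (Adm c)) mu c s u' * rho c (Fpay eta r mu c) (massU mu c) u' u
  - mu c s u * \sum_(u' : policy (Adm c)) rho c (Fpay eta r mu c) (massU mu c) u u'.

End Model.

Arguments inX {R C S A Adm} m mu.
Arguments inXSA {R C S A} m nu.
Arguments inXU {R U} mc sigma.
Arguments muSA {R C S A Adm} mu _.
Arguments massU {R C S A Adm} mu c _.
Arguments Fpay {R C S A Adm} eta r mu c _.
Arguments MSNE {R C S A Adm} m eta r mu.
Arguments f_d {R C S A Adm} lam phi mu c s u.
Arguments f_r {R C S A Adm} eta r rho mu c s u.

Definition trans_rel (R : realType) (St Ac : finType) (Adm : St -> {set Ac})
  (phi : St -> Ac -> St -> R) (u : policy Adm) : rel St :=
  fun x y => 0 < phi x (val u x) y.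
Arguments trans_rel {R St Ac Adm} phi u _ _.

Definition recurrent_state (St : finType) (e : rel St) (x : St) : Prop :=
  forall y, connect e x y -> connect e y x.
Arguments recurrent_state {St} e x.

Definition one_recurrent_class (St : finType) (e : rel St) : Prop :=
  (exists x, recurrent_state e x) /\
  (forall x y, recurrent_state e x -> recurrent_state e y -> connect e x y).
Arguments one_recurrent_class {St} e.

(* eta is a stationary distribution of the CTMC with generator lam (phi^u - I) *)
Definition ctmc_stationary (R : realType) (St Ac : finType) (Adm : St -> {set Ac})
  (lam : R) (phi : St -> Ac -> St -> R) (u : policy Adm) (eta : St -> R) : Prop :=
  (forall s, 0 <= eta s) /\ \sum_s eta s = 1 /\
  forall s, lam * (\sum_(s' : St) phi s' (val u s') s * eta s' - eta s) = 0.
Arguments ctmc_stationary {R St Ac Adm} lam phi u eta.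

(* ---------- Lipschitz notions (l^1 norms; all norms are equivalent) ---------- *)
Definition lipschitz_on_XU (R : realType) (U : finType) (mc : R)
  (h : (U -> R) -> (U -> R) -> R) : Prop :=
  exists L : R, forall F sigma F' sigma',
    inXU mc sigma -> inXU mc sigma' ->
    `|h F sigma - h F' sigma'| <=
      L * (\sum_w `|F w - F' w| + \sum_w `|sigma w - sigma' w|).
Arguments lipschitz_on_XU {R U} mc h.

Definition lipschitz_mx (R : realType) (U : finType) (mc : R)
  (g : (U -> R) -> (U -> R) -> U -> U -> R) : Prop :=
  exists L : R, forall F sigma F' sigma' u v,
    inXU mc sigma -> inXU mc sigma' ->
    `|g F sigma u v - g F' sigma' u v| <=
      L * (\sum_w `|F w - F' w| + \sum_w `|sigma w - sigma' w|).
Arguments lipschitz_mx {R U} mc g.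

Definition imitative_via_comparison (R : realType) (U : finType) (mc : R)
  (rho : (U -> R) -> (U -> R) -> U -> U -> R) : Prop :=
  exists rr : (U -> R) -> (U -> R) -> U -> U -> R,
    lipschitz_mx mc rr /\
    (forall F sigma u v, inXU mc sigma -> 0 <= rr F sigma u v) /\
    (forall F sigma u v k, inXU mc sigma ->
       (F u <= F v <->
        rr F sigma k u - rr F sigma u k <= rr F sigma k v - rr F sigma v k)) /\
    (forall F sigma u v, inXU mc sigma ->
       Num.sg (rr F sigma u v) = Num.sg (Num.max 0 (F v - F u))) /\
    (forall F sigma u v, inXU mc sigma ->
       rho F sigma u v = rr F sigma u v * sigma v / mc).
Arguments imitative_via_comparison {R U} mc rho.

Definition excess_payoff (R : realType) (U : finType) (mc : R)
  (rho : (U -> R) -> (U -> R) -> U -> U -> R) : Prop :=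
  exists tau : (U -> R) -> U -> R,
    (exists L : R, forall x y v, `|tau x v - tau y v| <= L * \sum_w `|x w - y w|) /\
    (forall x v, 0 <= tau x v) /\
    (forall x, ~ (forall v, x v <= 0) -> 0 < \sum_v tau x v * x v) /\
    (forall F sigma u v, inXU mc sigma ->
       rho F sigma u v = tau (fun w => F w - (\sum_w' F w' * sigma w') / mc) v).
Arguments excess_payoff {R U} mc rho.

Definition pairwise_comparison (R : realType) (U : finType) (mc : R)
  (rho : (U -> R) -> (U -> R) -> U -> U -> R) : Prop :=
  exists tau : (U -> R) -> U -> U -> R,
    (exists L : R, forall x y u v, `|tau x u v - tau y u v| <= L * \sum_w `|x w - y w|) /\
    (forall x u v, 0 <= tau x u v) /\
    (forall x u v, Num.sg (tau x u v) = Num.sg (Num.max 0 (x v - x u))) /\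
    (forall F sigma u v, inXU mc sigma -> rho F sigma u v = tau F u v).
Arguments pairwise_comparison {R U} mc rho.

Definition vecSA (R : realType) (C : nat) (S A : 'I_C -> finType)
  (nu : SA S A -> R) : 'rV[R]_#|SA S A| :=
  \row_i nu (enum_val i).
Arguments vecSA {R C S A} nu.

(* Main.v *)
Require Import Defs.
From HB Require Import structures.
From mathcomp Require Import all_boot all_order all_algebra.
From mathcomp Require Import all_classical all_reals all_analysis.
Import Order.TTheory GRing.Theory Num.Theory.
Import numFieldNormedType.Exports.
Local Open Scope ring_scope.
Local Open Scope classical_set_scope.

From mathcomp Require Import ring lra.
Lemma fr_zero (R : realType) (U : finType) (rho : U -> U -> R) (mus : U -> R) u :
  (forall q, mus q != 0 -> forall v, v != q -> rho q v = 0) ->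
  \sum_u' mus u' * rho u' u - mus u * \sum_u' rho u u' = 0.
Proof.
move=> H; rewrite mulr_sumr -sumrB big1 // => u' _.
have [->|ne] := eqVneq u' u; first by rewrite subrr.
have [z|nz] := eqVneq (mus u') 0; have [z'|nz'] := eqVneq (mus u) 0.
- by rewrite z z' !mul0r subrr.
- by rewrite z mul0r (H u nz' u' ne) mulr0 subrr.
- by rewrite z' mul0r (H u' nz u) ?mulr0 ?subrr // eq_sym.
- by rewrite (H u' nz u) ?(H u nz' u' ne) ?mulr0 ?subrr // eq_sym.
Qed.

Lemma tau_zero (R : realType) (U : finType) (tau : (U -> R) -> U -> R) (L : R) :
  (forall x y v, `|tau x v - tau y v| <= L * \sum_w `|x w - y w|) ->
  (forall x v, 0 <= tau x v) ->
  (forall x, ~ (forall v, x v <= 0) -> 0 < \sum_v tau x v * x v) ->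
  forall (x : U -> R) p w, (forall i, x i <= 0) -> x p = 0 -> w != p -> tau x w = 0.
Proof.
move=> Lip pos acu x p w xle xp wp.
have [e|tne] := eqVneq (tau x w) 0; first exact: e.
set t := tau x w. have tgt : 0 < t by rewrite lt0r tne pos.
set T := tau x p. have T0 : 0 <= T by apply: pos.
set a := t / (4 * (`|L| + 1)).
have a0 : 0 < a by rewrite /a divr_gt0 // mulr_gt0 // ltr_pwDr.
set b := a * t / (2 * (T + t)).
have b0 : 0 < b by rewrite /b divr_gt0 ?mulr_gt0 // ltr_pwDr.
have bT : b * (T + t) = a * t / 2.
  rewrite /b; clearbody a; have : T + t != 0 by rewrite lt0r_neq0 //; lra.
  move: (T+t) => z z0; by rewrite -mulrA invfM -mulrA mulfVK // mulrA.
have a4 : a * (4 * (`|L| + 1)) = t by rewrite /a mulfVK // lt0r_neq0 // mulr_gt0 // ltr_pwDr.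
have ba : b * t <= a * t / 2.
  rewrite -bT; apply: ler_wpM2l; [exact: ltW | lra].
have ba2 : b <= a / 2.
  nra.
have L0 : 0 <= `|L| by [].
have aL : `|L| * (a + b) <= t / 2 by nra.
set y := fun i => x i - (i == w)%:R * a + (i == p)%:R * b.
have pw : p != w by rewrite eq_sym.
have yp : y p = b.
  by rewrite /y xp eqxx eq_sym (negbTE wp) /= mul0r subr0 mul1r add0r.
have yw : y w = x w - a.
  by rewrite /y eqxx (negbTE wp) /= mul1r mul0r addr0.
have yo : forall i, i != w -> i != p -> y i = x i.
  by move=> i /negbTE iw /negbTE ip; rewrite /y iw ip /= !mul0r subr0 addr0.
have dist : \sum_i `|x i - y i| = a + b.
  rewrite (bigD1 w) //= (bigD1 p) //= big1 => [|i /andP[iw ip]].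
    rewrite yw yp xp (_ : x w - (x w - a) = a); last by rewrite opprB addrC subrK.
    rewrite sub0r normrN addr0.
    by rewrite !ger0_norm // ltW.
  by rewrite yo // subrr normr0.
have nle : ~ (forall v, y v <= 0).
  by move=> H; have := H p; rewrite yp; lra.
have pos_sum := acu y nle.
have up : \sum_v tau y v * y v <= tau y w * (x w - a) + tau y p * b.
  rewrite (bigD1 w) //= (bigD1 p) //= yw yp addrA.
  rewrite -[X in _ <= X]addr0 lerD2l.
  apply: sumr_le0 => i /andP[iw ip]; rewrite yo //.
  by apply: mulr_ge0_le0; [apply: pos | apply: xle].
have Lw := Lip x y w. have Lp := Lip x y p.
rewrite dist in Lw Lp.
have LL : L * (a + b) <= `|L| * (a + b) by apply: ler_wpM2r; [lra | exact: ler_norm].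
have tw : t - `|L| * (a + b) <= tau y w.
  move: Lw; rewrite -/t => /(le_trans (ler_norm _)) => h; lra.
have tp : tau y p <= T + `|L| * (a + b).
  move: Lp; rewrite -/T distrC => /(le_trans (ler_norm _)) => h; lra.
have xw := xle w.
have twp := pos y w. have tpp := pos y p.
have : tau y w * (x w - a) + tau y p * b <= 0 by nra.
lra.
Qed.

Theorem theorem4 (R : realType) (C : nat) (S A : 'I_C -> finType)
  (Adm : forall c : 'I_C, S c -> {set A c})
  (m lam Rrate : 'I_C -> R)
  (phi : forall c : 'I_C, S c -> A c -> S c -> R)
  (eta : forall c : 'I_C, policy (Adm c) -> S c -> R)
  (r : forall c : 'I_C, S c -> A c -> (SA S A -> R) -> R)
  (rho : forall c : 'I_C,
     (policy (Adm c) -> R) -> (policy (Adm c) -> R) ->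
     policy (Adm c) -> policy (Adm c) -> R)
  (mu : forall c : 'I_C, S c -> policy (Adm c) -> R) :
  (* model data *)
  (forall c, 0 < m c) ->
  (forall c (s : S c), Adm c s != finset.set0) ->
  (forall c (a : A c), exists s : S c, a \in Adm c s) ->
  (forall c (s : S c) (a : A c), a \in Adm c s ->
     (forall s', 0 <= phi c s a s') /\ \sum_(s' : S c) phi c s a s' = 1) ->
  (forall c, 0 < lam c) ->
  (* (A1) *)
  (forall c (s : S c) (a : A c),
     exists g : 'rV[R]_#|SA S A| -> R,
       (forall nu, inXSA m nu -> r c s a nu = g (vecSA nu)) /\
       (forall nu, inXSA m nu -> differentiable g (vecSA nu)) /\
       (forall i : 'I_#|SA S A|,
          {within [set vecSA nu | nu in [set nu | inXSA m nu]],
             continuous (fun x => derive g x (delta_mx 0 i))})) ->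
  (* (A2) *)
  (forall c (u : policy (Adm c)), one_recurrent_class (trans_rel (phi c) u)) ->
  (forall c (u : policy (Adm c)), ctmc_stationary (lam c) (phi c) u (eta c u)) ->
  (* revision protocols map R^n x X_U into nonnegative matrices *)
  (forall c F sigma (u v : policy (Adm c)), inXU (m c) sigma -> 0 <= rho c F sigma u v) ->
  (* (A3) *)
  (forall c, lipschitz_mx (m c) (rho c)) ->
  (forall c, 0 < Rrate c) ->
  (forall mu' : forall c : 'I_C, S c -> policy (Adm c) -> R, inX m mu' ->
     forall c (u : policy (Adm c)),
       \sum_(v : policy (Adm c) | v != u) rho c (Fpay eta r mu' c) (massU mu' c) u v
         <= Rrate c) ->
  (* protocol classes *)
  (forall c, imitative_via_comparison (m c) (rho c) \/
             excess_payoff (m c) (rho c) \/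
             pairwise_comparison (m c) (rho c)) ->
  (* conclusion *)
  MSNE m eta r mu ->
  forall c (s : S c) (u : policy (Adm c)),
    f_d lam phi mu c s u + f_r eta r rho mu c s u = 0.
Proof.
move=> hm hAdm hA hphi hlam hA1 hA2 hstat hrho0 hlip hR hRb hclass [hX hE] c s u.
set F := Fpay eta r mu c. set sig := massU mu c.
have sig0 : forall v, 0 <= sig v.
  by move=> v; apply: sumr_ge0 => s' _; exact: (hX c).1.
have sigX : inXU (m c) sig.
  split => //; rewrite /sig /massU exchange_big /=; exact: (hX c).2.
have hfd : f_d lam phi mu c s u = 0.
  rewrite /f_d.
  have inner : forall s', \sum_(a' in Adm c s') phi c s' a' s * pol_prob R u s' a' * mu c s' u
      = phi c s' (val u s') s * eta c u s' * sig u.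
    move=> s'; rewrite (bigD1 (val u s')) /=; last exact: (forallP (valP u)) s'.
    rewrite /pol_prob eqxx mulr1 big1 ?addr0 => [|a' /andP[_ ne]].
      by rewrite (hE c u).2 mulrA.
    by rewrite eq_sym in ne; rewrite (negbTE ne) mulr0 mul0r.
  rewrite (eq_bigr _ (fun s' _ => inner s')) -mulr_suml (hE c u).2.
  have [_ [_ st]] := hstat c u.
  have := st s.
  rewrite -/sig => e.
  by rewrite -mulrBr -mulrBl mulrA e mul0r.
have hfr : f_r eta r rho mu c s u = 0.
  rewrite /f_r -/F -/sig; apply: fr_zero => q nzq v vq.
  have sq : sig q != 0.
    by apply: contra nzq => /eqP z; rewrite (hE c q).2 -/sig z mulr0.
  have sqp : 0 < sig q by rewrite lt0r sq sig0.
  have opt := (hE c q).1 sqp. rewrite -/F -/sig in opt.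
  have mx : Num.max 0 (F v - F q) = 0 by apply: max_l; rewrite subr_le0.
  case: (hclass c) => [[rr [_ [_ [_ [sg eqr]]]]] | [[tau [[L Lip] [tpos [acu eqr]]]] | [tau [_ [_ [sg eqr]]]]]].
  - rewrite eqr //; have := sg F sig q v sigX; rewrite mx sgr0 => /eqP.
    by rewrite sgr_eq0 => /eqP ->; rewrite !mul0r.
  - rewrite eqr //.
    have avg : \sum_w' F w' * sig w' = F q * m c.
      rewrite -sigX.2 mulr_sumr; apply: eq_bigr => w' _.
      have [->|nz] := eqVneq (sig w') 0; first by rewrite !mulr0.
      have wp : 0 < sig w' by rewrite lt0r nz sig0.
      have opt' := (hE c w').1 wp. rewrite -/F -/sig in opt'.
      by congr (_ * _); apply/eqP; rewrite eq_le opt opt'.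
    apply: (@tau_zero _ _ tau L Lip tpos acu _ q) => //.
    + move=> i; rewrite avg mulfK ?lt0r_neq0 // subr_le0; exact: opt.
    + by rewrite avg mulfK ?lt0r_neq0 // subrr.
  - rewrite eqr //; have := sg F q v; rewrite mx sgr0 => /eqP.
    by rewrite sgr_eq0 => /eqP ->.
by rewrite hfd hfr addr0.
Qed.
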